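(* For all pairwise distinct $j,l,k\in\{1,\dots,M\}$, almost surely $$\big|\mathbb E\{g_{lk}(\boldsymbol X)-g_l(\boldsymbol X)-g_k(\boldsymbol X)\mid\boldsymbol X_{\mathcal X(\{l,j\})}\}\big|\le\frac{8\delta_0\sqrt{\mathbb E[f(\boldsymbol X)^2]}}{p_{\min}}.$$
   Context: Setup. $\boldsymbol X=(X_1,\dots,X_p)^\top$ is a random vector in $\{0,1\}^p$; $\{1,\dots,p\}$ is partitioned into disjoint nonempty feature groups $\mathcal X(1),\dots,\mathcal X(M)$; a group is either a single feature or has $\#\mathcal X(m)>1$ and consists of one-hot indicators ($\sum_{j\in\mathcal X(m)}\mathbf 1\{X_j=1\}=1$ a.s.). $\mathcal X(J)=\bigcup_{m\in J}\mathcal X(m)$; $\boldsymbol X_H=(X_j)_{j\in H}$, $\boldsymbol X_{-H}=(X_j)_{j\notin H}$. Conditional expectations given null events are set to $0$. $p_{\min}=\min_{1\le l<k\le M,\,i\in\mathcal X(l),\,j\in\mathcal X(k),\,(a,b)\in\{0,1\}^2}\mathbb P(X_i=a,X_j=b)>0$; $\delta_0=\max_{1\le m\le M}\inf\{\delta\ge0:\mathbb P(\max_{i\in\mathcal X(m)}|\mathbb P(X_i=1\mid\boldsymbol X_{-\mathcal X(m)})-\mathbb P(X_i=1)|\le\delta)=1\}$. For $f:\{0,1\}^p\to\mathbb R$ and $J\subset\{1,\dots,M\}$, $g_J(\boldsymbol X)=\mathbb E(f(\boldsymbol X)-\mathbb E(f(\boldsymbol X)\mid\boldsymbol X_{-\mathcal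 X(J)})\mid\boldsymbol X_{\mathcal X(J)})$, with $g_m=g_{\{m\}}$ and $g_{lk}=g_{\{l,k\}}$. *)

(* Defs.v *)
From mathcomp Require Import all_boot all_order all_algebra.
From mathcomp Require Import classical_sets reals.
Set Implicit Arguments. Unset Strict Implicit. Unset Printing Implicit Defensive.
Import Order.TTheory GRing.Theory Num.Theory.
Local Open Scope ring_scope.

Section Defs.
Variables (R : realType) (p M : nat).

Definition outcome := {ffun 'I_p -> bool}.

Variable P : outcome -> R.

Definition prob (A : pred outcome) : R := \sum_(x | A x) P x.
Definition expect (f : outcome -> R) : R := \sum_x P x * f x.

Definition agree (H : {set 'I_p}) (x y : outcome) : bool :=
  [forall i in H, x i == y i].

(* E(f(X) | X_H) evaluated at X = x; 0 on null conditioning events *)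
Definition condexp (f : outcome -> R) (H : {set 'I_p}) (x : outcome) : R :=
  let d := \sum_(y | agree H x y) P y in
  if d == 0 then 0 else (\sum_(y | agree H x y) P y * f y) / d.

Variable grp : 'I_p -> 'I_M.

Definition XJ (J : {set 'I_M}) : {set 'I_p} := [set i | grp i \in J].

Definition gJ (f : outcome -> R) (J : {set 'I_M}) (x : outcome) : R :=
  condexp (fun y => f y - condexp f (~: XJ J) y) (XJ J) x.

Definition pmin : R :=
  \big[Num.min/1]_(i : 'I_p) \big[Num.min/1]_(j : 'I_p | (grp i < grp j)%N)
    \big[Num.min/1]_(a : bool) \big[Num.min/1]_(b : bool)
      prob (fun x => (x i == a) && (x j == b)).

Definition delta_m (m : 'I_M) : R :=
  inf [set d : R | 0 <= d /\
    prob (fun x => [forall i : 'I_p, (grp i == m) ==>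
       (`| condexp (fun y => (y i)%:R) (~: XJ [set m]) x
           - prob (fun y => y i) | <= d)]) = 1].

Definition delta0 : R := \big[Num.max/0]_(m : 'I_M) delta_m m.

End Defs.

(* Main.v *)
Require Import Defs.
From mathcomp Require Import all_boot all_order all_algebra.
From mathcomp Require Import classical_sets reals.
From mathcomp Require Import ring lra.
Import Order.TTheory GRing.Theory Num.Theory.
Import fintype finset.
Local Open Scope ring_scope.
Set Implicit Arguments. Unset Strict Implicit. Unset Printing Implicit Defensive.

Section Gen.
Variables (R : realType) (p : nat) (P : outcome p -> R).
Hypothesis P_ge0 : forall x, 0 <= P x.
Hypothesis P_sum1 : \sum_x P x = 1.

Local Notation T := (outcome p).
Local Notation CE := (condexp P).
Implicit Types (H : {set 'I_p}) (x y z : T) (f g : T -> R).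

Definition mass (H : {set 'I_p}) (x : T) : R := \sum_(y | agree H x y) P y.
Definition meas (H : {set 'I_p}) (g : T -> R) := forall y z, agree H y z -> g y = g z.

Lemma agree_refl H x : agree H x x.
Proof. by apply/forall_inP => i _. Qed.

Lemma agree_sym H x y : agree H x y = agree H y x.
Proof.
by apply/forall_inP/forall_inP => h i hi; rewrite eq_sym; apply: h.
Qed.

Lemma agree_trans H x y z : agree H x y -> agree H y z -> agree H x z.
Proof.
move=> /forall_inP h1 /forall_inP h2; apply/forall_inP => i hi.
by rewrite (eqP (h1 i hi)) h2.
Qed.

Lemma agree_sub H H' x y : H \subset H' -> agree H' x y -> agree H x y.
Proof.
move=> /fintype.subsetP s /forall_inP h; apply/forall_inP => i hi; exact: h (s _ hi).
Qed.

Lemma agreeU H1 H2 x y : agree (H1 :|: H2) x y = agree H1 x y && agree H2 x y.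
Proof.
apply/idP/andP => [h|[h1 h2]].
  by split; apply: agree_sub h; [apply: finset.subsetUl|apply: finset.subsetUr].
apply/forall_inP => i; rewrite finset.in_setU => /orP[hi|hi].
  exact: (forall_inP h1).
exact: (forall_inP h2).
Qed.

Lemma agree0 x y : agree (finset.set0 : {set 'I_p}) x y.
Proof. by apply/forall_inP => i; rewrite finset.in_set0. Qed.

Lemma mass_ge0 H x : 0 <= mass H x.
Proof. by apply: sumr_ge0 => y _. Qed.

Lemma mass_geP H x : P x <= mass H x.
Proof.
rewrite /mass (bigD1 x) ?agree_refl //= lerDl; by apply: sumr_ge0.
Qed.

Lemma mass_pos H x : 0 < P x -> 0 < mass H x.
Proof. by move=> h; apply: lt_le_trans (mass_geP H x). Qed.

Lemma mass_class H x y : agree H x y -> mass H x = mass H y.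
Proof.
move=> hxy; apply: eq_bigl => z; apply/idP/idP => h.
  by apply: agree_trans h; rewrite agree_sym.
exact: agree_trans h.
Qed.

Lemma CE_class f H x y : agree H x y -> CE f H x = CE f H y.
Proof.
move=> hxy; rewrite /condexp.
have e : forall g : T -> R, \sum_(z | agree H x z) g z = \sum_(z | agree H y z) g z.
  move=> g; apply: eq_bigl => z; apply/idP/idP => h.
    by apply: agree_trans h; rewrite agree_sym.
  exact: agree_trans h.
by rewrite !e.
Qed.

Lemma CE_meas f H : meas H (CE f H).
Proof. move=> y z; exact: CE_class. Qed.

Lemma CE_ext f g H x : (forall y, agree H x y -> P y != 0 -> f y = g y) ->
  CE f H x = CE g H x.
Proof.
move=> h; rewrite /condexp; congr (if _ then _ else _ / _).
apply: eq_bigr => y hy; have [->|nz] := eqVneq (P y) 0; first by rewrite !mul0r.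
by rewrite h.
Qed.

Lemma CEE f H x : CE f H x =
  if mass H x == 0 then 0 else (\sum_(y | agree H x y) P y * f y) / mass H x.
Proof. by []. Qed.

Lemma CE_lin a b f g H x :
  CE (fun y => a * f y + b * g y) H x = a * CE f H x + b * CE g H x.
Proof.
rewrite !CEE; case: ifP => _; first by rewrite !mulr0 addr0.
rewrite !mulrA -mulrDl; congr (_ / _).
rewrite !mulr_sumr -big_split /=; apply: eq_bigr => y _.
by rewrite mulrDr !mulrA (mulrC a) (mulrC b).
Qed.

Lemma CE_sub f g H x : CE (fun y => f y - g y) H x = CE f H x - CE g H x.
Proof.
rewrite -(mul1r (CE f H x)) -[X in _ - X]mul1r -mulNr -(CE_lin 1 (-1)).
by apply: CE_ext => y _ _; rewrite mul1r mulN1r.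
Qed.

Lemma CE_pull g f H x : meas H g ->
  CE (fun y => g y * f y) H x = g x * CE f H x.
Proof.
move=> hg; rewrite !CEE; case: ifP => _; first by rewrite mulr0.
rewrite mulrA; congr (_ / _); rewrite mulr_sumr; apply: eq_bigr => y hy.
by rewrite (hg x y hy) mulrCA.
Qed.

Lemma CE_const c H x : 0 < mass H x -> CE (fun _ => c) H x = c.
Proof.
move=> hm; rewrite CEE (negbTE (lt0r_neq0 hm)) -mulr_suml -/(mass H x).
by rewrite mulrAC divff ?mul1r // lt0r_neq0.
Qed.

Lemma CE_self g H x : meas H g -> 0 < mass H x -> CE g H x = g x.
Proof.
move=> hg hm; rewrite -[LHS]/(CE (fun y => g y) H x).
have -> : CE (fun y => g y) H x = CE (fun y => g y * 1) H x.
  by apply: CE_ext => y _ _; rewrite mulr1.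
by rewrite CE_pull // CE_const // mulr1.
Qed.


Lemma REG0 H (w : T -> R) : (forall z, P z = 0 -> w z = 0) ->
  \sum_z w z = \sum_y (P y / mass H y) * \sum_(z | agree H y z) w z.
Proof.
move=> hw.
under [RHS]eq_bigr do rewrite mulr_sumr big_mkcond /=.
rewrite exchange_big /=; apply: eq_bigr => z _.
rewrite -big_mkcond /=.
have -> : \sum_(y | agree H y z) P y / mass H y * w z =
          \sum_(y | agree H z y) P y / mass H z * w z.
  apply: eq_big => y; first by rewrite agree_sym.
  by move=> hy; rewrite (mass_class hy).
rewrite -mulr_suml -mulr_suml -/(mass H z).
have [m0|mn0] := eqVneq (mass H z) 0.
  have : P z = 0 by apply/eqP; rewrite eq_le P_ge0 andbT -m0 mass_geP.
  by move/hw => ->; rewrite mulr0.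
by rewrite divff // mul1r.
Qed.

Lemma REG H (w g : T -> R) : (forall z, P z = 0 -> w z = 0) -> meas H g ->
  \sum_z w z * g z = \sum_y (P y / mass H y) * g y * \sum_(z | agree H y z) w z.
Proof.
move=> hw hg; rewrite (REG0 H (w := fun z => w z * g z)); last first.
  by move=> z /hw ->; rewrite mul0r.
apply: eq_bigr => y _; rewrite -[RHS]mulrA; congr (_ * _).
rewrite mulr_sumr; apply: eq_bigr => z hz; rewrite (hg y z hz) mulrC //.
Qed.

Lemma tower f H H' x : H \subset H' -> CE (CE f H') H x = CE f H x.
Proof.
move=> sHH; rewrite !CEE; case: ifP => // _; congr (_ / _).
rewrite [RHS](big_mkcond) [LHS]big_mkcond /=.
rewrite (REG0 H' (w := fun z => if agree H x z then P z * f z else 0)); last first.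
  by move=> z ->; rewrite mul0r if_same.
apply: eq_bigr => y _.
have e : forall z, agree H' y z -> agree H x z = agree H x y.
  move=> z hz; apply/idP/idP => h.
    by apply: agree_trans h _; rewrite agree_sym; apply: agree_sub hz.
  by apply: agree_trans h _; apply: agree_sub hz.
under eq_bigr => z hz do rewrite (e z hz).
case: ifP => hxy; last by rewrite big1 ?mulr0.
rewrite CEE; case: ifP => [/eqP m0|_].
  have : P y = 0 by apply/eqP; rewrite eq_le P_ge0 andbT -m0 mass_geP.
  by move=> ->; rewrite !mul0r.
by rewrite (mulrC _ (mass H' y)^-1) mulrA.
Qed.

Definition x0 : T := [ffun => false].


Lemma mass0 x : mass finset.set0 x = 1.
Proof. by rewrite /mass -P_sum1; apply: eq_bigl => y; rewrite agree0. Qed.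

Lemma CE0 f x : CE f (finset.set0 : {set 'I_p}) x = expect P f.
Proof.
rewrite CEE.
have hm := mass0 x.
rewrite -/(mass _ x) hm oner_eq0 divr1 /expect; apply: eq_bigl => y; exact: agree0.
Qed.

Lemma expect_CE f H : expect P (CE f H) = expect P f.
Proof.
rewrite -[LHS](CE0 _ x0) tower; first exact: CE0. exact: finset.sub0set.
Qed.

Lemma CE_bound g H x c : 0 < mass H x ->
  (forall y, agree H x y -> 0 < P y -> `|g y| <= c) -> `|CE g H x| <= c.
Proof.
move=> hm hb; rewrite CEE (negbTE (lt0r_neq0 hm)) normrM normfV (gtr0_norm hm).
rewrite ler_pdivrMr //.
apply: le_trans (ler_norm_sum _ _ _) _; rewrite /mass mulr_sumr.
apply: ler_sum => y hy; rewrite normrM (ger0_norm (P_ge0 y)) mulrC.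
have [->|nz] := eqVneq (P y) 0; first by rewrite !mulr0.
by rewrite ler_pM2r ?hb // lt0r nz P_ge0.
Qed.

Lemma CE_ge0 g H x : (forall y, 0 <= g y) -> 0 <= CE g H x.
Proof.
move=> hg; rewrite CEE; case: ifP => // _; apply: divr_ge0; last exact: mass_ge0.
by apply: sumr_ge0 => y _; apply: mulr_ge0.
Qed.

Lemma CE_var f H x : 0 < mass H x ->
  CE (fun y => (f y - CE f H x) ^+ 2) H x = CE (fun y => f y ^+ 2) H x - CE f H x ^+ 2.
Proof.
move=> hm; set c := CE f H x.
have -> : CE (fun y => (f y - c) ^+ 2) H x =
    CE (fun y => 1 * f y ^+ 2 + 1 * ((- (2 * c)) * f y + c ^+ 2 * 1)) H x.
  by apply: CE_ext => y _ _; rewrite !mul1r mulr1 sqrrB; ring.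
rewrite (CE_lin 1 1 (fun y => f y ^+ 2)) (CE_lin (- (2 * c)) (c ^+ 2) f (fun _ => 1)) CE_const // -/c; ring.
Qed.

Lemma jensen f H x : CE f H x ^+ 2 <= CE (fun y => f y ^+ 2) H x.
Proof.
have [hm|hm] := ltrP 0 (mass H x); last first.
  have m0 : mass H x == 0 by rewrite eq_le hm mass_ge0.
  by rewrite !CEE m0 expr0n.
by rewrite -subr_ge0 -CE_var //; apply: CE_ge0 => y; apply: sqr_ge0.
Qed.

Lemma expect_le g h : (forall y, g y <= h y) -> expect P g <= expect P h.
Proof. by move=> hh; apply: ler_sum => y _; apply: ler_wpM2l. Qed.

Lemma contraction f H :
  expect P (fun y => CE f H y ^+ 2) <= expect P (fun y => f y ^+ 2).
Proof.
apply: le_trans (expect_le (h := CE (fun y => f y ^+ 2) H) _) _.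
  by move=> y; apply: jensen.
by rewrite expect_CE.
Qed.

Lemma variance u : expect P (fun y => (u y - expect P u) ^+ 2) <= expect P (fun y => u y ^+ 2).
Proof.
have hm : 0 < mass finset.set0 x0.
  by rewrite mass0 ltr01.
rewrite -!(CE0 _ x0) CE_var // lerBlDr lerDl; apply: sqr_ge0.
Qed.

Lemma pullE w g H : meas H w ->
  expect P (fun z => w z * g z) = expect P (fun z => w z * CE g H z).
Proof.
move=> hw; rewrite -(expect_CE _ H); apply: eq_bigr => z _; by rewrite CE_pull.
Qed.

Lemma CS (A : pred T) h :
  \sum_(z | A z) P z * `|h z| <= Num.sqrt (expect P (fun y => h y ^+ 2)).
Proof.
set E := expect P _.
have E0 : 0 <= E by apply: sumr_ge0 => y _; apply: mulr_ge0 => //; apply: sqr_ge0.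
have [s0|spos] := eqVneq (Num.sqrt E) 0.
  have : E = 0 by move/eqP: (s0); rewrite sqrtr_eq0 => h0; apply/eqP; rewrite eq_le h0 E0.
  move=> E00; rewrite s0.
  have hz : forall y, P y * h y ^+ 2 = 0.
    move=> y; apply/eqP; move: E00; rewrite /E /expect => /eqP.
    rewrite psumr_eq0 => [/allP/(_ y)|]; first by rewrite mem_index_enum => /(_ isT).
    by move=> i _; apply: mulr_ge0 => //; apply: sqr_ge0.
  rewrite le_eqVlt; apply/orP; left; apply/eqP; apply: big1 => y _.
  move: (hz y) => /eqP; rewrite mulf_eq0 => /orP[/eqP->|]; first by rewrite mul0r.
  by rewrite sqrf_eq0 => /eqP ->; rewrite normr0 mulr0.
set s := Num.sqrt E.
have sp : 0 < s by rewrite lt0r spos sqrtr_ge0.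
have ineq : forall y, P y * `|h y| <= P y * ((h y ^+ 2 / s + s) / 2).
  move=> y; apply: ler_wpM2l => //.
  have hh : h y ^+ 2 = `|h y| ^+ 2 by rewrite -normrX ger0_norm // sqr_ge0.
  rewrite -subr_ge0.
  have -> : (h y ^+ 2 / s + s) / 2 - `|h y| = (`|h y| - s) ^+ 2 / (2 * s).
    by rewrite hh; field; rewrite lt0r_neq0.
  by apply: divr_ge0; [apply: sqr_ge0 | apply: mulr_ge0 => //; apply: ltW].
apply: le_trans (ler_sum _ (fun y _ => ineq y)) _.
have e1 : \sum_(z | A z) P z * ((h z ^+ 2 / s + s) / 2) =
   ((\sum_(z | A z) P z * h z ^+ 2) / s + s * \sum_(z | A z) P z) / 2.
  have -> : (\sum_(z | A z) P z * h z ^+ 2) / s + s * \sum_(z | A z) P z =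
      \sum_(z | A z) (P z * h z ^+ 2 / s + s * P z).
    by rewrite big_split /= -mulr_suml -mulr_sumr.
  rewrite mulr_suml; apply: eq_bigr => y _; field; rewrite lt0r_neq0 //.
rewrite e1 ler_pdivrMr // -[s * 2]/(s * 2).
have l1 : \sum_(z | A z) P z * h z ^+ 2 <= E.
  rewrite /E /expect [X in _ <= X](bigID A) /= lerDl.
  by apply: sumr_ge0 => y _; apply: mulr_ge0 => //; apply: sqr_ge0.
have l2 : \sum_(z | A z) P z <= 1.
  by rewrite -P_sum1 [X in _ <= X](bigID A) /= lerDl; apply: sumr_ge0.
have sE : E = s * s by rewrite -expr2 sqr_sqrtr.
have : (\sum_(z | A z) P z * h z ^+ 2) / s <= s.
  by rewrite ler_pdivrMr // -sE.
have : s * \sum_(z | A z) P z <= s by apply: ler_piMr => //; apply: ltW.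
move=> a b; apply: le_trans (lerD b a) _; rewrite mulrDr mulr1 addrC //.
Qed.
Variables (M : nat) (grp : 'I_p -> 'I_M).
Hypothesis grp_surj : forall m : 'I_M, exists i : 'I_p, grp i = m.
Hypothesis grp_onehot : forall m : 'I_M, (1 < #|[set i | grp i == m]|)%N ->
      prob P (fun x => #|[set i | (grp i == m) && x i]| == 1%N) = 1.

Local Notation G m := (XJ grp [set m]).
Lemma prob_supp (A B : pred T) : (forall t, 0 < P t -> A t = B t) -> prob P A = prob P B.
Proof.
move=> hAB; change (\sum_(t | A t) P t = \sum_(t | B t) P t).
rewrite big_mkcond [RHS]big_mkcond; apply: eq_bigr => t _.
have [pt|] := ltrP 0 (P t); first by rewrite hAB.
move=> hle; have -> : P t = 0 by apply/eqP; rewrite eq_le hle P_ge0.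
by rewrite !if_same.
Qed.

Lemma prob_one (A : pred T) y : prob P A = 1 -> 0 < P y -> A y.
Proof.
move=> h1 py; apply/negPn/negP => nA.
have : \sum_(t | ~~ A t) P t = 0.
  move: P_sum1; rewrite (bigID A) /= -/(prob P A) h1 => e.
  by apply: (addrI 1); rewrite addr0.
move/eqP; rewrite psumr_eq0 // => /allP /(_ y); rewrite mem_index_enum => /(_ isT).
by rewrite nA /= => /eqP py0; move: py; rewrite py0 ltxx.
Qed.

Lemma G_eq m : G m = [set i | grp i == m].
Proof. by apply/setP => i; rewrite !inE. Qed.

Lemma REP m y : 0 < P y -> exists i, grp i = m /\
  forall z, 0 < P z -> agree (G m) y z = (y i == z i).
Proof.
move=> py.
have [i0 hi0] := grp_surj m.
have c1 : (0 < #|[set i | grp i == m]|)%N by apply/card_gt0P; exists i0; rewrite inE hi0.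
case: (ltngtP #|[set i | grp i == m]| 1) => hc.
- by move: c1; rewrite ltnNge -ltnS hc.
- have oh := prob_one (grp_onehot hc).
  have one : forall z, 0 < P z -> exists2 i, grp i = m & forall i', grp i' = m -> z i' = (i' == i).
    move=> z pz; move: (oh z pz) => /cards1P [i hS].
    have hi : i \in [set i | (grp i == m) && z i] by rewrite hS set11.
    rewrite inE in hi; case/andP: hi => /eqP gi zi.
    exists i => // i' gi'.
    have : (i' \in [set i | (grp i == m) && z i]) = (i' == i) by rewrite hS inE.
    by rewrite inE gi' eqxx /=.
  have [i gi hy] := one y py; exists i; split => // z pz.
  have [i' gi' hz] := one z pz.
  have yi : y i = true by rewrite hy // eqxx.
  rewrite yi; apply/forall_inP/idP => [h|zi].
    have hiG : i \in G m by rewrite inE finset.in_set1 gi.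
    by have := h i hiG; rewrite yi.
  have e : i = i'.
    by move: zi; rewrite eq_sym => /eqP; rewrite hz // => /eqP.
  move=> k; rewrite inE finset.in_set1 => /eqP gk.
  by rewrite hy // hz // -e.
- have /cards1P [i hS] : #|[set i | grp i == m]| == 1%N by rewrite hc.
  have gi : grp i = m.
    have : i \in [set i | grp i == m] by rewrite hS set11.
    by rewrite inE => /eqP.
  exists i; split => // z _.
  apply/forall_inP/idP => [h|e].
    by apply: h; rewrite inE finset.in_set1 gi.
  move=> k; rewrite G_eq => hk.
  by move: hk; rewrite hS finset.in_set1 => /eqP ->.
Qed.

Lemma CE01 g H x : (forall y, 0 <= g y <= 1) -> 0 <= CE g H x <= 1.
Proof.
move=> hg; apply/andP; split; first by apply: CE_ge0 => y; case/andP: (hg y).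
have [hm|hm] := ltrP 0 (mass H x).
  apply: le_trans (ler_norm _) _; apply: CE_bound => // y _ _.
  by case/andP: (hg y) => a b; rewrite ger0_norm.
have m0 : mass H x == 0 by rewrite eq_le hm mass_ge0.
by rewrite CEE m0 ler01.
Qed.

Lemma prob01 (A : pred T) : 0 <= prob P A <= 1.
Proof.
apply/andP; split; first by apply: sumr_ge0.
rewrite -P_sum1 [X in _ <= X](bigID A) /= lerDl; by apply: sumr_ge0.
Qed.

Lemma delta_le m i z : grp i = m -> 0 < P z ->
  `|CE (fun y => (y i)%:R) (~: G m) z - prob P (fun y => y i)| <= delta0 P grp.
Proof.
move=> gi pz; apply: le_trans (le_bigmax _ _ m); rewrite /delta_m.
apply: lb_le_inf.
  exists 1; split; first exact: ler01.
  rewrite (prob_supp (B := fun _ => true)) //; move=> t _.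
  apply/forallP => i'; apply/implyP => _.
  have /andP[a b] : 0 <= CE (fun y => (y i')%:R) (~: G m) t <= 1.
    by apply: CE01 => y; case: (y i'); rewrite ?ler01 ?lexx.
  have /andP[c d] := prob01 (fun y => y i').
  rewrite ler_norml; apply/andP; split; lra.
move=> d [d0 hd]; have := prob_one hd pz.
by move/forallP/(_ i)/implyP; rewrite gi eqxx => /(_ isT).
Qed.

Lemma KEY m y z : 0 < P y -> 0 < P z ->
  `|CE (fun t => (agree (G m) y t)%:R) (~: G m) z - mass (G m) y| <= delta0 P grp.
Proof.
move=> py pz; have [i [gi hi]] := REP m py.
have e1 : CE (fun t => (agree (G m) y t)%:R) (~: G m) z =
          CE (fun t => (y i == t i)%:R) (~: G m) z.
  by apply: CE_ext => t _ nz; rewrite hi // lt0r nz P_ge0.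
have e2 : mass (G m) y = prob P (fun t => y i == t i) := prob_supp (fun t pt => hi t pt).
rewrite e1 e2; case yi: (y i).
  have -> : CE (fun t => (true == t i)%:R) (~: G m) z = CE (fun t => (t i)%:R) (~: G m) z.
    by apply: CE_ext => t _ _; case: (t i).
  have -> : prob P (fun t => true == t i) = prob P (fun t => t i).
    by apply: prob_supp => t _; case: (t i).
  exact: delta_le.
have -> : CE (fun t => (false == t i)%:R) (~: G m) z =
    CE (fun t => 1 * (fun _ => 1) t + (-1) * (t i)%:R) (~: G m) z.
  by apply: CE_ext => t _ _; case: (t i); rewrite /= ?mul1r ?mulN1r ?subrr ?subr0.
rewrite CE_lin CE_const; last exact: mass_pos.
have -> : prob P (fun t => false == t i) = 1 - prob P (fun t => t i).
  have hs : \sum_(t : T) P t = \sum_(t : T | t i) P t + \sum_(t : T | ~~ t i) P t := bigID _ _ _.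
  rewrite P_sum1 in hs; rewrite hs [X in X - _]addrC addrK.
  by apply: eq_bigl => t; case: (t i).
have -> : 1 * 1 + -1 * CE (fun t => (t i)%:R) (~: G m) z - (1 - prob P (fun t => t i)) =
   - (CE (fun t => (t i)%:R) (~: G m) z - prob P (fun t => t i)) by ring.
by rewrite normrN; exact: delta_le.
Qed.

Lemma pmin_le i j a b : (grp i < grp j)%N ->
  pmin P grp <= prob P (fun t => (t i == a) && (t j == b)).
Proof.
move=> hlt; rewrite /pmin.
apply: le_trans (bigmin_le _ i _) _.
apply: le_trans (bigmin_le_cond _ _ hlt) _.
apply: le_trans (bigmin_le _ a _) _.
exact: (bigmin_le _ b _).
Qed.

Lemma PM a b x y : a != b -> 0 < P x -> 0 < P y ->
  pmin P grp <= prob P (fun t => agree (G a) x t && agree (G b) y t).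
Proof.
move=> hab px py.
have [i [gi hi]] := REP a px; have [j [gj hj]] := REP b py.
rewrite (prob_supp (B := fun t => (t i == x i) && (t j == y j))); last first.
  by move=> t pt; rewrite hi // hj // ![_ == t _]eq_sym.
case: (ltngtP (grp i) (grp j)) => h.
- exact: pmin_le.
- rewrite (prob_supp (B := fun t => (t j == y j) && (t i == x i))); last first.
    by move=> t _; rewrite andbC.
  exact: pmin_le.
- by move: hab; rewrite -gi -gj (val_inj h) eqxx.
Qed.

Lemma PM1 a b y : a != b -> 0 < P y -> pmin P grp <= mass (G b) y.
Proof.
move=> hab py; apply: le_trans (PM hab py py) _.
rewrite [X in _ <= X](bigID (fun t => agree (G a) y t)) /= -[X in X <= _]addr0 lerD //.
  by rewrite le_eqVlt; apply/orP; left; apply/eqP; apply: eq_bigl => t; rewrite andbC.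
by apply: sumr_ge0.
Qed.

Lemma CE_centered g H x c d : 0 < mass H x ->
  (forall t, agree H x t -> 0 < P t -> `|g t - c| <= d) -> `|CE g H x - c| <= d.
Proof.
move=> hm hb.
have -> : CE g H x - c = CE (fun t => 1 * g t + (-c) * (fun _ => 1) t) H x.
  by rewrite CE_lin CE_const // mul1r mulr1.
apply: CE_bound => // t ht pt; rewrite mul1r mulr1; exact: hb.
Qed.

Definition NB m (g : T -> R) := \sum_y P y / mass (G m) y * g y.

Lemma NB_ge0 m g : (forall y, 0 <= g y) -> 0 <= NB m g.
Proof.
move=> hg; apply: sumr_ge0 => y _; apply: mulr_ge0 => //.
by apply: divr_ge0 => //; apply: mass_ge0.
Qed.

Lemma CE_minus_E v H x : 0 < mass H x ->
  CE v H x - expect P v = \sum_z (P z * ((agree H x z)%:R / mass H x - 1)) * v z.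
Proof.
move=> hm; rewrite CEE (negbTE (lt0r_neq0 hm)) /expect mulr_suml big_mkcond /= -sumrB.
apply: eq_bigr => z _; case: (agree H x z) => /=; last by rewrite mul0r sub0r; ring.
by rewrite mul1r; ring.
Qed.

Lemma L2gen m H v x : H \subset ~: G m -> meas (G m) v -> 0 < P x ->
  `|CE v H x - expect P v| <= delta0 P grp * NB m (fun y => `|v y|).
Proof.
move=> sH hv px; have hm := mass_pos H px.
rewrite CE_minus_E // (REG (H := G m)) //; last by move=> z ->; rewrite mul0r.
rewrite /NB mulr_sumr; apply: le_trans (ler_norm_sum _ _ _) _.
apply: ler_sum => y _.
have [py0|py] := eqVneq (P y) 0; first by rewrite py0 !mul0r normr0 mulr0.
have pyp : 0 < P y by rewrite lt0r py P_ge0.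
have my := mass_pos (G m) pyp.
rewrite normrM normrM (ger0_norm (divr_ge0 (P_ge0 y) (mass_ge0 _ _))).
rewrite [X in _ <= X]mulrCA -mulrA ler_wpM2l //; first by apply: divr_ge0 => //; apply: mass_ge0.
rewrite mulrC ler_wpM2r //.
have -> : \sum_(z | agree (G m) y z) P z * ((agree H x z)%:R / mass H x - 1) =
    CE (fun t => (agree (G m) y t)%:R) H x - mass (G m) y.
  rewrite CEE (negbTE (lt0r_neq0 hm)) mulr_suml.
  have -> : mass (G m) y = \sum_(z | agree (G m) y z) P z by [].
  rewrite big_mkcond [X in _ = X - _]big_mkcond [X in _ = _ - X]big_mkcond -sumrB /=.
  apply: eq_bigr => z _.
  case: (agree H x z); case: (agree (G m) y z) => /=; rewrite ?mulr0 ?mul0r ?subrr //; ring.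
rewrite -(tower _ _ sH).
apply: CE_centered => // t _ pt; exact: KEY.
Qed.

Local Notation nrm g := (Num.sqrt (expect P (fun y => g y ^+ 2))).

Lemma nrm_CE f H : nrm (CE f H) <= nrm f.
Proof. apply: ler_wsqrtr; exact: contraction. Qed.

Lemma XJ2 a b : XJ grp [set a; b] = G a :|: G b.
Proof. by apply/setP => i; rewrite !inE. Qed.

Lemma Gdisj a b : a != b -> G a \subset ~: G b.
Proof.
move=> hab; apply/fintype.subsetP => i; rewrite !inE => /eqP ->; exact: hab.
Qed.

Lemma NB_bound m S x g : meas (G m) g -> (forall y, 0 <= g y) ->
  (forall y, 0 < P y -> pmin P grp <= prob P (fun t => agree S x t && agree (G m) y t)) ->
  pmin P grp * NB m g <= \sum_(z | agree S x z) P z * g z.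
Proof.
move=> hg g0 hp.
rewrite big_mkcond /=.
have -> : \sum_z (if agree S x z then P z * g z else 0) =
   \sum_z ((agree S x z)%:R * P z) * g z.
  by apply: eq_bigr => z _; case: (agree S x z); rewrite ?mul1r ?mul0r.
rewrite (REG (H := G m)) //; last by move=> z ->; rewrite mulr0.
rewrite /NB mulr_sumr; apply: ler_sum => y _.
have [py0|py] := eqVneq (P y) 0; first by rewrite py0 !mul0r mulr0.
have pyp : 0 < P y by rewrite lt0r py P_ge0.
have nn : 0 <= P y / mass (G m) y * g y.
  by apply: mulr_ge0 => //; apply: divr_ge0 => //; apply: mass_ge0.
rewrite mulrC ler_wpM2l //.
apply: le_trans (hp y pyp) _; rewrite le_eqVlt; apply/orP; left; apply/eqP.
rewrite [RHS]big_mkcond [LHS]big_mkcond /=; apply: eq_bigr => z _.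
by case: (agree S x z); case: (agree (G m) y z); rewrite /= ?mul1r ?mul0r.
Qed.

Hypothesis pmin_gt0 : 0 < pmin P grp.

Definition splice (S : {set 'I_p}) x y : T := [ffun i => if i \in S then x i else y i].

Lemma e1 (a b c : 'I_M) f x : a != b -> c != b -> 0 < P x ->
  `|CE (CE f (XJ grp [set a; b])) (XJ grp [set a; c]) x - CE f (G a) x|
    <= 2 * delta0 P grp * nrm f / pmin P grp.
Proof.
move=> hab hcb px.
rewrite !XJ2; set h := CE f (G a :|: G b).
pose v y := h (splice (G a) x y).
have sab := Gdisj hab.
have ha : forall z, agree (G a) x z -> h z = v z.
  move=> z hz; apply: CE_class; apply/forall_inP => i.
  rewrite finset.in_setU => /orP[hi|hi]; rewrite /splice ffunE.
    by rewrite hi; rewrite eq_sym; exact: (forall_inP hz).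
  have : i \notin G a.
    apply/negP => hia; have := (fintype.subsetP sab) i hia; by rewrite inE hi.
  by move/negbTE ->.
have hv : meas (G b) v.
  move=> y y' hy; apply: CE_class; apply/forall_inP => i hi.
  rewrite /splice !ffunE; case: ifP => // hia.
  rewrite finset.in_setU hia /= in hi.
  exact: (forall_inP hy).
have e2 : CE h (G a :|: G c) x = CE v (G a :|: G c) x.
  apply: CE_ext => z hz _; apply: ha; apply: agree_sub hz; exact: finset.subsetUl.
have e3 : CE f (G a) x = CE v (G a) x.
  rewrite -(tower f x (finset.subsetUl (G a) (G b))) -/h.
  by apply: CE_ext => z hz _; apply: ha.
have hsub : G a :|: G c \subset ~: G b by rewrite finset.subUset sab Gdisj.
have L1 := L2gen hsub hv px.
have L2 := L2gen sab hv px.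
have d0 : 0 <= delta0 P grp by apply: bigmax_ge_id.
have hN : NB b (fun y => `|v y|) <= nrm f / pmin P grp.
  rewrite ler_pdivlMr // mulrC.
  apply: le_trans (NB_bound (S := G a) (x := x) _ _ _) _.
  - by move=> y y' hy; rewrite (hv y y' hy).
  - by move=> y; apply: normr_ge0.
  - by move=> y py; apply: PM.
  have -> : \sum_(z | agree (G a) x z) P z * `|v z| = \sum_(z | agree (G a) x z) P z * `|h z|.
    by apply: eq_bigr => z hz; rewrite ha.
  apply: le_trans (CS _ _) _; exact: nrm_CE.
rewrite e2 e3.
apply: le_trans (ler_distD (expect P v) _ _) _.
rewrite [`|expect P v - _|]distrC.
have hN' : delta0 P grp * NB b (fun y => `|v y|) <= delta0 P grp * (nrm f / pmin P grp).
  exact: ler_wpM2l.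
have -> : 2 * delta0 P grp * nrm f / pmin P grp =
   delta0 P grp * (nrm f / pmin P grp) + delta0 P grp * (nrm f / pmin P grp) by ring.
apply: lerD; exact: le_trans hN'.
Qed.

Lemma e2 (a b c : 'I_M) f x : a != b -> c != b -> 0 < P x ->
  `|CE (CE f (G b)) (XJ grp [set a; c]) x - expect P f|
    <= delta0 P grp * nrm f / pmin P grp.
Proof.
move=> hab hcb px; rewrite XJ2 -(expect_CE f (G b)).
have hsub : G a :|: G c \subset ~: G b by rewrite finset.subUset !Gdisj.
apply: le_trans (L2gen hsub (@CE_meas f (G b)) px) _.
have d0 : 0 <= delta0 P grp by apply: bigmax_ge_id.
rewrite -mulrA ler_wpM2l //.
rewrite ler_pdivlMr // mulrC.
apply: le_trans (NB_bound (S := finset.set0) (x := x) _ _ _) _.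
- by move=> y y' hy; rewrite (CE_class _ hy).
- by move=> y; apply: normr_ge0.
- move=> y py; apply: le_trans (PM1 hab py) _.
  by rewrite le_eqVlt; apply/orP; left; apply/eqP; apply: eq_bigl => t; rewrite agree0.
apply: le_trans (CS _ _) _; exact: nrm_CE.
Qed.

Lemma split_bound F K pi d : (forall z, 0 < P z -> `|K z - pi| <= d) ->
  `|expect P (fun z => F z * K z) - pi * expect P F| <= d * \sum_z P z * `|F z|.
Proof.
move=> hK.
have -> : expect P (fun z => F z * K z) - pi * expect P F =
    \sum_z P z * F z * (K z - pi).
  rewrite /expect mulr_sumr -sumrB; apply: eq_bigr => z _; ring.
apply: le_trans (ler_norm_sum _ _ _) _; rewrite mulr_sumr; apply: ler_sum => z _.
rewrite !normrM (ger0_norm (P_ge0 z)).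
have [pz0|pz] := eqVneq (P z) 0; first by rewrite pz0 !mul0r mulr0.
have pzp : 0 < P z by rewrite lt0r pz P_ge0.
have hb := hK z pzp. have nn : 0 <= P z * `|F z| by apply: mulr_ge0.
nra.
Qed.

Lemma expect_center w : expect P (fun z => w z - expect P w) = 0.
Proof.
rewrite /expect.
have -> : \sum_x P x * (w x - \sum_x0 P x0 * w x0) =
  \sum_x P x * w x - (\sum_x0 P x0 * w x0) * \sum_x P x.
  by rewrite mulr_sumr -sumrB; apply: eq_bigr => z _; ring.
by rewrite P_sum1 mulr1 subrr.
Qed.

Lemma nrm_center w : nrm (fun z => w z - expect P w) <= nrm w.
Proof. apply: ler_wsqrtr; exact: variance. Qed.

Lemma NUM b w y : meas (~: G b) w -> 0 < P y ->
  `|expect P (fun z => (w z - expect P w) * (agree (G b) y z)%:R)| <= delta0 P grp * nrm w.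
Proof.
move=> hw py; set g := fun z => w z - expect P w.
have hg : meas (~: G b) g by move=> s t hst; rewrite /g (hw s t hst).
rewrite (pullE _ hg).
have hK : forall z, 0 < P z ->
    `|CE (fun z => (agree (G b) y z)%:R) (~: G b) z - mass (G b) y| <= delta0 P grp.
  by move=> z pz; apply: KEY.
have h1 := split_bound g hK.
rewrite expect_center mulr0 subr0 in h1.
apply: le_trans h1 _; rewrite ler_wpM2l //; first by apply: bigmax_ge_id.
apply: le_trans (nrm_center w).
exact: (CS (fun _ => true) g).
Qed.

Lemma div_mono (Y D m q : R) : 0 < q -> q <= m -> 0 <= D -> Y <= D -> Y / m <= D / q.
Proof.
move=> q0 qm D0 YD; have m0 : 0 < m by apply: lt_le_trans qm.
rewrite ler_pdivrMr //; apply: le_trans YD _.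
rewrite -subr_ge0.
have -> : D / q * m - D = D / q * (m - q) by field; rewrite lt0r_neq0.
apply: mulr_ge0; [by apply: divr_ge0 => //; apply: ltW | by rewrite subr_ge0].
Qed.

Lemma CEdiff w H y : 0 < mass H y ->
  CE w H y - expect P w = expect P (fun z => (w z - expect P w) * (agree H y z)%:R) / mass H y.
Proof.
move=> hm; rewrite CEE (negbTE (lt0r_neq0 hm)).
have -> : expect P (fun z => (w z - expect P w) * (agree H y z)%:R) =
    \sum_(z | agree H y z) P z * w z - expect P w * mass H y.
  rewrite /expect /mass mulr_sumr big_mkcond [X in _ = X - _]big_mkcond
          [X in _ = _ - X]big_mkcond -sumrB /=.
  apply: eq_bigr => z _; case: (agree H y z) => /=; ring.
by field; rewrite lt0r_neq0.
Qed.

Lemma e3 a b w y : a != b -> meas (~: G b) w -> 0 < P y ->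
  `|CE w (G b) y - expect P w| <= delta0 P grp * nrm w / pmin P grp.
Proof.
move=> hab hw py; have hm := mass_pos (G b) py.
rewrite CEdiff // normrM normfV (gtr0_norm hm).
apply: div_mono => //; first exact: PM1 hab py.
  by apply: mulr_ge0; [apply: bigmax_ge_id | apply: sqrtr_ge0].
exact: NUM.
Qed.

Lemma e5 a b u x : a != b -> meas (~: (G a :|: G b)) u -> 0 < P x ->
  `|CE u (G a :|: G b) x - expect P u| <= 2 * delta0 P grp * nrm u / pmin P grp.
Proof.
move=> hab hu px; have hm := mass_pos (G a :|: G b) px.
have d0 : 0 <= delta0 P grp by apply: bigmax_ge_id.
rewrite CEdiff // normrM normfV (gtr0_norm hm).
apply: div_mono => //.
- apply: le_trans (PM hab px px) _; rewrite le_eqVlt; apply/orP; left; apply/eqP.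
  by apply: eq_bigl => t; rewrite agreeU.
- by rewrite -mulrA; apply: mulr_ge0 => //; apply: mulr_ge0 => //; apply: sqrtr_ge0.
set g := fun z => u z - expect P u.
have hub : meas (~: G b) u.
  move=> s t hst; apply: hu; apply: agree_sub hst.
  by rewrite finset.setCS finset.subsetUr.
have hua : meas (~: G a) u.
  move=> s t hst; apply: hu; apply: agree_sub hst.
  by rewrite finset.setCS finset.subsetUl.
pose F := fun z => g z * (agree (G b) x z)%:R.
have hF : meas (~: G a) F.
  move=> s t hst; rewrite /F /g (hua s t hst).
  suff -> : agree (G b) x s = agree (G b) x t by [].
  apply/idP/idP => h.
    apply: agree_trans h _; apply: agree_sub hst; by apply: Gdisj; rewrite eq_sym.
  apply: agree_trans h _; rewrite agree_sym; apply: agree_sub hst; by apply: Gdisj; rewrite eq_sym.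
have -> : expect P (fun z => g z * (agree (G a :|: G b) x z)%:R) =
    expect P (fun z => F z * (agree (G a) x z)%:R).
  apply: eq_bigr => z _; rewrite /F agreeU; case: (agree (G a) x z); case: (agree (G b) x z) => /=; ring.
rewrite (pullE _ hF).
have hK : forall z, 0 < P z ->
    `|CE (fun z => (agree (G a) x z)%:R) (~: G a) z - mass (G a) x| <= delta0 P grp.
  by move=> z pz; apply: KEY.
have h1 := split_bound F hK.
have h2 : `|mass (G a) x * expect P F| <= delta0 P grp * nrm u.
  rewrite normrM; apply: le_trans (_ : 1 * _ <= _); last first.
    rewrite mul1r; exact: (NUM hub px).
  apply: ler_wpM2r => //; rewrite ger0_norm ?mass_ge0 //.
  by have /andP[_ ->] := prob01 (agree (G a) x).
have h3 : \sum_z P z * `|F z| <= nrm u.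
  apply: le_trans (nrm_center u); apply: le_trans (CS (fun _ => true) g).
  apply: ler_sum => z _; apply: ler_wpM2l => //; rewrite /F normrM.
  by case: (agree (G b) x z); rewrite /= ?normr1 ?normr0 ?mulr1 ?mulr0.
have h4 : delta0 P grp * \sum_z P z * `|F z| <= delta0 P grp * nrm u by apply: ler_wpM2l.
set E1 := expect P _ in h1 *; set E2 := mass (G a) x * expect P F in h1 h2.
have : `|E1| <= `|E1 - E2| + `|E2|.
  by rewrite -{1}(subrK E2 E1); apply: ler_normD.
move=> h5; apply: le_trans h5 _.
have -> : 2 * delta0 P grp * nrm u = delta0 P grp * nrm u + delta0 P grp * nrm u by ring.
apply: lerD => //; exact: le_trans h1 h4.
Qed.

Lemma scale_mono (c n1 n2 : R) : 0 <= c -> n1 <= n2 ->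
  c * delta0 P grp * n1 / pmin P grp <= c * delta0 P grp * n2 / pmin P grp.
Proof.
move=> c0 hn; have d0 : 0 <= delta0 P grp by apply: bigmax_ge_id.
apply: ler_wpM2r; first by rewrite invr_ge0 ltW.
by apply: ler_wpM2l => //; apply: mulr_ge0.
Qed.

Lemma scale_mono1 (n1 n2 : R) : n1 <= n2 ->
  delta0 P grp * n1 / pmin P grp <= delta0 P grp * n2 / pmin P grp.
Proof. by move=> h; have := scale_mono ler01 h; rewrite !mul1r. Qed.

Lemma main_sec f (j l k : 'I_M) : j != l -> j != k -> l != k ->
  forall x, 0 < P x ->
    `| CE (fun y => gJ P grp f [set l; k] y - gJ P grp f [set l] y
                           - gJ P grp f [set k] y)
               (XJ grp [set l; j]) x |
    <= 8 * delta0 P grp * nrm f / pmin P grp.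
Proof.
move=> hjl hjk hlk x px.
have d0 : 0 <= delta0 P grp by apply: bigmax_ge_id.
set n := nrm f; set q := pmin P grp; set d := delta0 P grp.
have hkl : k != l by rewrite eq_sym.
have hlj : l != j by rewrite eq_sym.
have hkj : k != j by rewrite eq_sym.
have hAC : 0 < mass (XJ grp [set l; j]) x := mass_pos _ px.
rewrite (CE_sub (fun y => gJ P grp f [set l; k] y - gJ P grp f [set l] y)) CE_sub.
rewrite /gJ.
have fsub : forall (f1 f2 : T -> R) H, CE (fun y => f1 y - f2 y) H = (fun y => CE f1 H y - CE f2 H y).
  by move=> f1 f2 H; apply: boolp.funext => y; exact: CE_sub.
rewrite !fsub /=.
set T1 := CE (CE f (XJ grp [set l; k])) (XJ grp [set l; j]) x.
set T2 := CE (CE (CE f (~: XJ grp [set l; k])) (XJ grp [set l; k])) (XJ grp [set l; j]) x.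
have hself : forall h, CE (CE h (G l)) (XJ grp [set l; j]) x = CE h (G l) x.
  move=> h; apply: CE_self => // s t hst; apply: CE_class.
  apply: agree_sub hst; rewrite XJ2; exact: finset.subsetUl.
rewrite !hself.
set T3 := CE f (G l) x.
set T3' := CE (CE f (~: G l)) (G l) x.
set T4 := CE (CE f (G k)) (XJ grp [set l; j]) x.
set T5 := CE (CE (CE f (~: G k)) (G k)) (XJ grp [set l; j]) x.
set E := expect P f.
have -> : T1 - T2 - (T3 - T3') - (T4 - T5) =
   (T1 - T3) - (T2 - E) + (T3' - E) - (T4 - E) + (T5 - E) by ring.
have b1 : `|T1 - T3| <= 2 * d * n / q by apply: e1.
have b2 : `|T2 - E| <= 2 * d * n / q.
  rewrite /T2 /E -(expect_CE f (~: XJ grp [set l; k])).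
  apply: CE_centered => // t _ pt.
  rewrite XJ2; apply: le_trans (e5 hlk _ pt) _.
    by move=> s u hsu; apply: CE_class.
  by apply: scale_mono => //; apply: nrm_CE.
have b3 : `|T3' - E| <= 1 * d * n / q.
  rewrite /T3' /E -(expect_CE f (~: G l)) mul1r.
  apply: le_trans (e3 hkl _ px) _; first by move=> s u hsu; apply: CE_class.
  by apply: scale_mono1; apply: nrm_CE.
have b4 : `|T4 - E| <= 1 * d * n / q by rewrite mul1r; apply: e2.
have b5 : `|T5 - E| <= 1 * d * n / q.
  rewrite /T5 /E -(expect_CE f (~: G k)).
  apply: CE_centered => // t _ pt.
  apply: le_trans (e3 hlk _ pt) _; first by move=> s u hsu; apply: CE_class.
  by rewrite mul1r; apply: scale_mono1; apply: nrm_CE.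
have tri : forall a b : R, `|a + b| <= `|a| + `|b| := fun a b => ler_normD a b.
have trim : forall a b : R, `|a - b| <= `|a| + `|b|.
  by move=> a b; apply: le_trans (ler_normD _ _) _; rewrite normrN.
apply: le_trans (tri _ _) _; apply: le_trans (lerD (trim _ _) (lexx _)) _.
apply: le_trans (lerD (lerD (tri _ _) (lexx _)) (lexx _)) _.
apply: le_trans (lerD (lerD (lerD (trim _ _) (lexx _)) (lexx _)) (lexx _)) _.
have hq : 0 < q := pmin_gt0.
have -> : 8 * d * n / q = 2 * d * n / q + 2 * d * n / q + 1 * d * n / q + 1 * d * n / q
   + 1 * d * n / q + 1 * (d * n / q) by ring.
have pos : 0 <= 1 * (d * n / q).
  rewrite mul1r; apply: divr_ge0; [apply: mulr_ge0 => //; apply: sqrtr_ge0 | exact: ltW].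
apply: le_trans (_ : _ <= 2 * d * n / q + 2 * d * n / q + 1 * d * n / q + 1 * d * n / q
   + 1 * d * n / q + 0) _; last by rewrite lerD2l.
rewrite addr0; rewrite -!addrA; do 4! apply: lerD => //.
Qed.

End Gen.

Theorem lemma4 (R : realType) (p M : nat) (P : outcome p -> R)
  (grp : 'I_p -> 'I_M) (f : outcome p -> R)
  (P_ge0 : forall x, 0 <= P x)
  (P_sum1 : \sum_x P x = 1)
  (grp_surj : forall m : 'I_M, exists i : 'I_p, grp i = m)
  (grp_onehot : forall m : 'I_M, (1 < #|[set i | grp i == m]|)%N ->
      prob P (fun x => #|[set i | (grp i == m) && x i]| == 1%N) = 1)
  (pmin_gt0 : 0 < pmin P grp)
  (j l k : 'I_M) (hjl : j != l) (hjk : j != k) (hlk : l != k) :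
  forall x : outcome p, 0 < P x ->
    `| condexp P (fun y => gJ P grp f [set l; k] y - gJ P grp f [set l] y
                           - gJ P grp f [set k] y)
               (XJ grp [set l; j]) x |
    <= 8 * delta0 P grp * Num.sqrt (expect P (fun y => f y ^+ 2)) / pmin P grp.
Proof.
move=> x px.
exact: (main_sec P_ge0 P_sum1 grp_surj grp_onehot pmin_gt0 f hjl hjk hlk px).
Qed.
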